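(* Let $p$ be a smooth function on $T^\ast(\mathbb{R}^n)\smallsetminus0$ with $\operatorname{Re}p=\xi_1$, and let $\gamma$ and $\gamma_j$, $j\ge1$, be bicharacteristics of $\operatorname{Re}p=\xi_1$ such that $\operatorname{Im}p$ strongly changes sign from $-$ to $+$ on $\gamma_j$ for each $j$. If $\gamma_j\dashrightarrow\gamma$ as $j\to\infty$, then $L_p(\gamma)\le\liminf_{j\to\infty}L_p(\gamma_j)$.
   Context: Write points of $T^\ast(\mathbb{R}^n)$ as $(x_1,x',\xi_1,\xi')$. A bicharacteristic of $\xi_1$ is $\gamma=[a,b]\times\{w_0\}=\{(t,x',0,\xi'):a\le t\le b\}$, $w_0=(x',0,\xi')$; write $g(t,w)$; $|\gamma|=b-a$. For $\gamma_j=[a_j,b_j]\times\{w_j\}$, $\gamma_j\dashrightarrow\gamma$ means $\liminf a_j\ge a$, $\limsup b_j\le b$, $w_j\to w_0$. $\operatorname{Im}p$ strongly changes sign from $-$ to $+$ on $[a,b]\times\{w_0\}$ if $\operatorname{Im}p(t,w_0)=0$ for $a\le t\le b$ and for every $\varepsilon>0$ there exist $a-\varepsilon<s_-<a$, $b<s_+<b+\varepsilon$ with $\operatorname{Im}p(s_-,w_0)<0<\operatorname{Im}p(s_+,w_0)$. If some sequence of bicharacteristics $\gamma_j$ of $\xi_1$ with this sign change satisfies $\gamma_j\dashrightarrow\gamma$, then $L_p(\gamma)=\inf\liminf_j|\gamma_j|$ over all such sequences. *)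

(* Defs.v *)
From HB Require Import structures.
From mathcomp Require Import all_boot all_order all_algebra.
From mathcomp Require Import all_classical all_reals all_analysis.
From mathcomp Require Import complex.
Set Implicit Arguments. Unset Strict Implicit. Unset Printing Implicit Defensive.
Import Order.TTheory GRing.Theory Num.Theory.
Import numFieldNormedType.Exports.
Local Open Scope classical_set_scope.
Local Open Scope ring_scope.

(* Points of T^*(R^n), n = m.+1, written ((x1, x'), (xi1, xi')). *)
Notation cotan R m := ((R * 'rV[R]_m) * (R * 'rV[R]_m))%type.

Definition cotan0 (R : realType) (m : nat) : set (cotan R m) :=
  [set z | z.2 != 0].
Arguments cotan0 R m : clear implicits.

Fixpoint iter_dd (R : realType) (V : normedModType R) (vs : seq V) (f : V -> R)
  : V -> R :=
  match vs with
  | [::] => f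
  | v :: vs' => fun x => 'D_v (iter_dd vs' f) x
  end.

Definition smooth_on (R : realType) (V : normedModType R) (U : set V)
  (f : V -> R) : Prop :=
  forall vs : seq V, forall x, U x ->
    (forall v : V, derivable (iter_dd vs f) x v) /\
    {for x, continuous (iter_dd vs f)}.

(* a bicharacteristic [a,b] x {w0} of xi1, w0 = (x', 0, xi'), xi' <> 0 *)
Record bichar (R : realType) (m : nat) := Bichar {
  bc_a : R; bc_b : R; bc_x : 'rV[R]_m; bc_xi : 'rV[R]_m;
  bc_ab : bc_a <= bc_b; bc_xi0 : bc_xi != 0 }.

Definition gpt (R : realType) (m : nat) (t : R) (x' xi' : 'rV[R]_m) : cotan R m :=
  ((t, x'), (0, xi')).

Definition bc_len (R : realType) (m : nat) (g : bichar R m) : R := bc_b g - bc_a g.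

Definition strong_sign_change (R : realType) (m : nat) (p : cotan R m -> R[i])
  (g : bichar R m) : Prop :=
  (forall t, bc_a g <= t <= bc_b g -> complex.Im (p (gpt t (bc_x g) (bc_xi g))) = 0) /\
  (forall e : R, 0 < e -> exists sm sp : R,
      [/\ bc_a g - e < sm < bc_a g, bc_b g < sp < bc_b g + e,
          complex.Im (p (gpt sm (bc_x g) (bc_xi g))) < 0 &
          0 < complex.Im (p (gpt sp (bc_x g) (bc_xi g)))]).

Definition bc_conv (R : realType) (m : nat) (gs : nat -> bichar R m)
  (g : bichar R m) : Prop :=
  ((bc_a g)%:E <= limn_einf (fun j => (bc_a (gs j))%:E))%E /\
  (limn_esup (fun j => (bc_b (gs j))%:E) <= (bc_b g)%:E)%E /\
  ((fun j => bc_x (gs j)) @ \oo --> bc_x g) /\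
  ((fun j => bc_xi (gs j)) @ \oo --> bc_xi g).

(* L_p(gamma) = inf liminf |gamma_j| over all sequences with sign change
   converging to gamma (value +oo if there is no such sequence) *)
Definition Lp (R : realType) (m : nat) (p : cotan R m -> R[i]) (g : bichar R m)
  : \bar R :=
  ereal_inf [set l | exists gs : nat -> bichar R m,
     [/\ forall j, strong_sign_change p (gs j), bc_conv gs g &
         l = limn_einf (fun j => (bc_len (gs j))%:E)]].

(* Main.v *)
Require Import Defs.
From HB Require Import structures.
From mathcomp Require Import all_boot all_order all_algebra.
From mathcomp Require Import all_classical all_reals all_analysis.
From mathcomp Require Import complex.
From mathcomp Require Import lra.
Import Order.TTheory GRing.Theory Num.Theory.
Import numFieldNormedType.Exports.
Local Open Scope classical_set_scope.
Local Open Scope ring_scope.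

Section H.
Variable R : realType.
Local Open Scope ereal_scope.

Lemma einfE (u : (\bar R)^nat) : limn_einf u = ereal_sup (range (einfs u)).
Proof. by rewrite limn_einf_lim; apply/cvg_lim => //; exact: cvg_einfs_sup. Qed.

Lemma einf_gtP (u : (\bar R)^nat) x : x < limn_einf u ->
  exists N, forall n, (N <= n)%N -> x < u n.
Proof.
rewrite einfE => /ereal_sup_gt [_ [N _ <-]] Hx; exists N => n Nn.
apply: (lt_le_trans Hx); apply: ereal_inf_lbound; by exists n.
Qed.

Lemma einf_geP (u : (\bar R)^nat) x : (exists N, forall n, (N <= n)%N -> x <= u n) ->
  x <= limn_einf u.
Proof.
move=> [N HN]; rewrite einfE.
have H1 : einfs u N <= ereal_sup (range (einfs u)) by apply: ereal_sup_ubound; exists N.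
apply: le_trans H1.
by apply: le_ereal_inf_tmp => _ [n /= Nn <-]; apply: HN.
Qed.

Lemma einf_ltP (u : (\bar R)^nat) x : limn_einf u < x ->
  forall N, exists2 n, (N <= n)%N & u n < x.
Proof.
rewrite einfE => Hx N.
have : einfs u N < x.
  by apply: le_lt_trans Hx; apply: ereal_sup_ubound; exists N.
move=> /ereal_inf_lt [_ [n /= Nn <-]] H; by exists n.
Qed.

Lemma einf_leP (u : (\bar R)^nat) x : (forall N, exists2 n, (N <= n)%N & u n <= x) ->
  limn_einf u <= x.
Proof.
move=> H; rewrite einfE; apply: ge_ereal_sup => _ [N _ <-].
have [n Nn unx] := H N; apply: le_trans unx; apply: ereal_inf_lbound; by exists n.
Qed.

Lemma le_by_reals (X L : \bar R) : (forall c : R, L < c%:E -> X <= c%:E) -> X <= L.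
Proof.
case: L => [r| |] H.
- apply/lee_addgt0Pr => e e0; rewrite -EFinD; apply: H.
  by rewrite lte_fin ltrDl.
- exact: leey.
- case: X H => [x| |] H //.
  + have := H (x - 1)%R (ltNyr _); rewrite lee_fin => /le_trans/(_ (lexx _)).
    by rewrite -subr_ge0 addrAC subrr add0r oppr_ge0 ler10.
  + by have := H 0%R (ltNyr _).
Qed.

Lemma liminf_geR (u : nat -> R) (x : R) :
  x%:E <= limn_einf (fun n => (u n)%:E) ->
  forall e : R, (0 < e)%R -> exists N, forall n, (N <= n)%N -> (x - e < u n)%R.
Proof.
move=> H e e0; have : (x - e)%:E < limn_einf (fun n => (u n)%:E).
  by apply: lt_le_trans H; rewrite lte_fin ltrBlDr ltrDl.
move=> /einf_gtP [N HN]; exists N => n /HN; by rewrite lte_fin.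
Qed.

Lemma liminf_geR' (u : nat -> R) (x : R) :
  (forall e : R, (0 < e)%R -> exists N, forall n, (N <= n)%N -> (x - e < u n)%R) ->
  x%:E <= limn_einf (fun n => (u n)%:E).
Proof.
move=> H; apply/lee_addgt0Pr => e e0.
rewrite -leeBlDr //.
apply: einf_geP; have [N HN] := H e e0; exists N => n /HN.
by rewrite -EFinB lee_fin => /ltW.
Qed.

Lemma limsup_esupE (u : nat -> R) :
  limn_esup (fun n => (u n)%:E) = - limn_einf (fun n => (- u n)%R%:E).
Proof. rewrite -limn_esupN; congr limn_esup; apply/funext => n /=; by rewrite opprK. Qed.

Lemma limsup_leR (u : nat -> R) (x : R) :
  limn_esup (fun n => (u n)%:E) <= x%:E ->
  forall e : R, (0 < e)%R -> exists N, forall n, (N <= n)%N -> (u n < x + e)%R.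
Proof.
rewrite limsup_esupE leeNl -EFinN => /liminf_geR H e e0.
have [N HN] := H e e0; exists N => n /HN; by rewrite -opprD ltrN2.
Qed.

Lemma limsup_leR' (u : nat -> R) (x : R) :
  (forall e : R, (0 < e)%R -> exists N, forall n, (N <= n)%N -> (u n < x + e)%R) ->
  limn_esup (fun n => (u n)%:E) <= x%:E.
Proof.
move=> H; rewrite limsup_esupE leeNl -EFinN; apply: liminf_geR' => e e0.
have [N HN] := H e e0; exists N => n /HN; by rewrite -opprD ltrN2.
Qed.

End H.
Arguments einf_gtP {R u x}. Arguments einf_geP {R u x}. Arguments einf_ltP {R u x}. Arguments einf_leP {R u x}. Arguments le_by_reals {R X L}.
Arguments liminf_geR {R u x}. Arguments liminf_geR' {R u x}. Arguments limsup_leR {R u x}. Arguments limsup_leR' {R u x}.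


Lemma half_gt0 (R : realType) (e : R) : 0 < e -> 0 < e / 2.
Proof. by move=> e0; rewrite divr_gt0. Qed.
Arguments half_gt0 {R e}.

Theorem lemma2p15 (R : realType) (m : nat) (p : cotan R m -> R[i])
  (g : bichar R m) (gs : nat -> bichar R m) :
  smooth_on (cotan0 R m) (fun z => complex.Re (p z)) ->
  smooth_on (cotan0 R m) (fun z => complex.Im (p z)) ->
  (forall z, cotan0 R m z -> complex.Re (p z) = z.2.1) ->
  (forall j, strong_sign_change p (gs j)) ->
  bc_conv gs g ->
  (Lp p g <= limn_einf (fun j => Lp p (gs j)))%E.
Proof.
move=> _ _ _ Hs Hconv.
apply: le_by_reals => c Hc.
have Hfreq := einf_ltP Hc.
pose eps (j : nat) : R := j.+1%:R^-1.
have eps0 j : 0 < eps j by rewrite /eps invr_gt0 ltr0n.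
have Hex : forall j, exists h : bichar R m,
  [/\ strong_sign_change p h, bc_a (gs j) - eps j < bc_a h, bc_b h < bc_b (gs j) + eps j,
      `|bc_x (gs j) - bc_x h| < eps j /\ `|bc_xi (gs j) - bc_xi h| < eps j &
      (Lp p (gs j) < c%:E)%E -> bc_len h < c].
  move=> j; have [Hlt|Hlt] := pselect (is_true (Lp p (gs j) < c%:E)%E); last first.
    exists (gs j); split => //.
    - by rewrite ltrBlDr ltrDl.
    - by rewrite ltrDl.
    - by rewrite !subrr !normr0; split.
  move: Hlt; rewrite /Lp => /ereal_inf_lt [_ [hs [Hhs [ca [cb [cx cxi]]] ->]] Hlen].
  have [N1 H1] := liminf_geR ca _ (eps0 j).
  have [N2 H2] := limsup_leR cb _ (eps0 j).
  move/cvgrPdist_lt: cx => /(_ _ (eps0 j)) [N3 _ H3].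
  move/cvgrPdist_lt: cxi => /(_ _ (eps0 j)) [N4 _ H4].
  have [n Hn Hlenn] := einf_ltP Hlen (maxn (maxn N1 N2) (maxn N3 N4)).
  move: Hn; rewrite !geq_max => /andP[/andP[h1 h2] /andP[h3 h4]].
  exists (hs n); split => //.
  - exact: H1.
  - exact: H2.
  - by split; [exact: H3 | exact: H4].
case: (choice Hex) => h Hh.
have Hharm e : 0 < e -> exists N, forall n, (N <= n)%N -> eps n < e.
  move=> e0; move/cvgrPdist_lt: (@cvg_harmonic R) => /(_ _ e0) [N _ HN].
  exists N => n /HN /=; by rewrite sub0r normrN ger0_norm // ltW.
apply: (@le_trans _ _ (limn_einf (fun j => (bc_len (h j))%:E))); last first.
  apply: einf_leP => N; have [j Nj Hj] := Hfreq N; exists j => //.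
  by case: (Hh j) => _ _ _ _ /(_ Hj) H; rewrite lee_fin ltW.
rewrite /Lp; apply: ereal_inf_lbound; exists h; split => //.
  by move=> j; case: (Hh j).
case: Hconv => ca [cb [cx cxi]].
split; [|split; [|split]].
- apply: liminf_geR' => e e0.
  have [N1 H1] := liminf_geR ca _ (half_gt0 e0).
  have [N2 H2] := Hharm _ (half_gt0 e0).
  exists (maxn N1 N2) => n; rewrite geq_max => /andP[n1 n2].
  have := H1 n n1; have := H2 n n2; case: (Hh n) => _ Ha _ _ _.
  move: Ha; set A := bc_a (h n); set B := bc_a (gs n); set E := eps n.
  by move=> *; lra.
- apply: limsup_leR' => e e0.
  have [N1 H1] := limsup_leR cb _ (half_gt0 e0).
  have [N2 H2] := Hharm _ (half_gt0 e0).
  exists (maxn N1 N2) => n; rewrite geq_max => /andP[n1 n2].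
  have := H1 n n1; have := H2 n n2; case: (Hh n) => _ _ Hb _ _.
  move: Hb; set A := bc_b (h n); set B := bc_b (gs n); set E := eps n.
  by move=> *; lra.
- apply/cvgrPdist_lt => e e0.
  move/cvgrPdist_lt: cx => /(_ _ (half_gt0 e0)) [N1 _ H1].
  have [N2 H2] := Hharm _ (half_gt0 e0).
  exists (maxn N1 N2) => // n /=; rewrite geq_max => /andP[n1 n2].
  have := H1 n n1; have := H2 n n2; case: (Hh n) => _ _ _ [Hx _] _.
  move=> a b; apply: (le_lt_trans (ler_distD (bc_x (gs n)) _ _)).
  have -> : e = e / 2 + e / 2 by rewrite -splitr.
  by rewrite ltrD // (lt_trans Hx).
- apply/cvgrPdist_lt => e e0.
  move/cvgrPdist_lt: cxi => /(_ _ (half_gt0 e0)) [N1 _ H1].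
  have [N2 H2] := Hharm _ (half_gt0 e0).
  exists (maxn N1 N2) => // n /=; rewrite geq_max => /andP[n1 n2].
  have := H1 n n1; have := H2 n n2; case: (Hh n) => _ _ _ [_ Hx] _.
  move=> a b; apply: (le_lt_trans (ler_distD (bc_xi (gs n)) _ _)).
  have -> : e = e / 2 + e / 2 by rewrite -splitr.
  by rewrite ltrD // (lt_trans Hx).
Qed.
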